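(* Assume the standing assumptions in the context. Let $S\subsetneq S^*$ and $k=|S|$. Then $$\max_{i\in[d]\setminus S}|Z_i^S|\ \ge\ \sqrt{\frac{\rho^3}{L}}\,\frac{1}{\sqrt{s^*-k}}\,\|\beta^*-\beta^S\|_2\ \ge\ \sqrt{\frac{\rho^3}{L}}\,\frac{1}{\sqrt{s^*-k}}\,\|\beta^*_{S^*\setminus S}\|_2.$$
   Context: Standing assumptions: $(x,y)$ random with $x\in\mathbb{R}^d$, $y\in\mathbb{R}$; $\mathbb{E}[x]=0$; $y=\langle\beta^*,x\rangle+\epsilon$ with $\mathbb{E}[\epsilon\mid x]=0$; $S^*=\mathrm{supp}(\beta^* )$, $s^*=|S^*|$; $\Sigma$ the covariance of $x$, $\Sigma_F$ its principal submatrix on $F$; there are $0<\rho\le L$ with all eigenvalues of $\Sigma_F$ in $[\rho,L]$ for all $|F|=s^*$; for $|F|=s^*$, $\mu_F:=\max_{j\notin F}\|\Sigma_F^{-1}\mathrm{Cov}(x_F,x_j)\|_1<1$; $|y|<1$ and $\|x\|_\infty<M$ almost surely. $\mathcal{R}(\beta)=\mathbb{E}[(y-\langle x,\beta\rangle)^2]$, $\beta^S=\arg\min_{\mathrm{supp}(\beta)\subseteq S}\mathcal{R}(\beta)$, $Z_i^S=\mathbb{E}[x_i(y-\langle x,\beta^S\rangle)]$. For a vector $v$ and $F\subseteq[d]$, $v_F$ is its restriction to coordinates in $F$. *)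

(* Defs.v *)
From HB Require Import structures.
From mathcomp Require Import all_boot all_order all_algebra.
From mathcomp Require Import all_classical all_reals all_analysis.
Set Implicit Arguments. Unset Strict Implicit. Unset Printing Implicit Defensive.
Import Order.TTheory GRing.Theory Num.Theory.
Local Open Scope classical_set_scope.
Local Open Scope ring_scope.

Section Defs.
Context {dT : measure_display} {T : measurableType dT} {R : realType}.
Variable (P : probability T R).

(* real-valued expectation (all variables involved are a.s. bounded) *)
Definition Ex (X : T -> R) : R := fine ('E_P[X])%E.

Definition Sigma (d : nat) (x : 'I_d -> T -> R) : 'M[R]_d :=
  \matrix_(i, j) fine (covariance P (x i) (x j)).

Definition SigmaF (d : nat) (x : 'I_d -> T -> R) (F : {set 'I_d}) : 'M[R]_#|F| :=
  \matrix_(i, j) Sigma x (enum_val i) (enum_val j).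

Definition CovFj (d : nat) (x : 'I_d -> T -> R) (F : {set 'I_d}) (j : 'I_d)
  : 'cV[R]_#|F| := \col_i Sigma x (enum_val i) j.

Definition inner (d : nat) (x : 'I_d -> T -> R) (b : 'I_d -> R) : T -> R :=
  fun t => \sum_(i < d) b i * x i t.

Definition risk (d : nat) (x : 'I_d -> T -> R) (y : T -> R) (b : 'I_d -> R) : R :=
  Ex (fun t => (y t - inner x b t) ^+ 2).

Definition supp (d : nat) (b : 'I_d -> R) : {set 'I_d} := [set i | b i != 0].

Definition is_betaS (d : nat) (x : 'I_d -> T -> R) (y : T -> R)
  (S : {set 'I_d}) (bS : 'I_d -> R) : Prop :=
  supp bS \subset S /\
  forall b : 'I_d -> R, supp b \subset S -> risk x y bS <= risk x y b.

Definition Zc (d : nat) (x : 'I_d -> T -> R) (y : T -> R) (bS : 'I_d -> R)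
  (i : 'I_d) : R := Ex (fun t => x i t * (y t - inner x bS t)).

Definition sigma_x (d : nat) (x : 'I_d -> T -> R) : set (set T) :=
  <<s [set A | exists i : 'I_d, exists B : set R, measurable B /\ A = x i @^-1` B] >>.

(* E[eps | x] = 0 : integral of eps over every x-measurable event vanishes *)
Definition cond_mean_zero (d : nat) (x : 'I_d -> T -> R) (eps : T -> R) : Prop :=
  forall A : set T, sigma_x x A -> expectation P (fun t : T => \1_A t * eps t) = 0%E.

Definition l2norm (d : nat) (b : 'I_d -> R) : R := Num.sqrt (\sum_(i < d) b i ^+ 2).

End Defs.

(* Main.v *)
Require Import Defs.
From HB Require Import structures.
From mathcomp Require Import all_boot all_order all_algebra.
From mathcomp Require Import all_classical all_reals all_analysis.
From mathcomp Require Import ring lra measurable_realfun.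
Import Order.TTheory GRing.Theory Num.Theory numFieldNormedType.Exports.
Local Open Scope classical_set_scope.
Local Open Scope ring_scope.

Lemma quad0 (R : realType) (a b : R) : (forall t, 0 <= 2 * t * b + t ^+ 2 * a) -> b = 0.
Proof.
move=> H; apply/eqP; apply/negPn/negP => hb.
have ha := ler_norm a.
have D0 : 0 < `|a| + 1 by have := normr_ge0 a; lra.
have := H (- b / (`|a| + 1)).
have -> : 2 * (- b / (`|a| + 1)) * b + (- b / (`|a| + 1)) ^+ 2 * a
   = b ^+ 2 / (`|a| + 1) ^+ 2 * (a - 2 * (`|a| + 1)).
  by field; rewrite gt_eqF.
have hb2 : 0 < b ^+ 2 / (`|a| + 1) ^+ 2.
  by apply: divr_gt0; [rewrite exprn_even_gt0 //|exact: exprn_gt0].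
have h1 : a - 2 * (`|a| + 1) < 0 by lra.
by rewrite pmulr_rge0 // leNgt h1.
Qed.

Section Cont.
Context {R : realType} {n : nat}.
Lemma cont_sum (I : eqType) (r : seq I) (F : I -> 'rV[R]_n -> R) :
  (forall i, continuous (fun v : 'rV[R]_n => F i v)) ->
  continuous (fun v : 'rV[R]_n => \sum_(i <- r) F i v).
Proof.
move=> hF; elim: r => [|a r IH].
  under eq_fun do rewrite big_nil; exact: cst_continuous.
under eq_fun do rewrite big_cons.
move=> v; apply: (@continuousD _ _ _ (F a) (fun v => \sum_(i <- r) F i v)); [exact: hF|exact: IH].
Qed.
End Cont.

Section Eig.
Context {R : realType} {n : nat} (A : 'M[R]_n) (rho : R).
Hypothesis hA : forall i j, A i j = A j i.
Hypothesis hev : forall a, eigenvalue A a -> rho <= a.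

Definition bil (u v : 'rV[R]_n) := \sum_i \sum_j u ord0 i * A i j * v ord0 j.
Definition sq (v : 'rV[R]_n) := \sum_i v ord0 i ^+ 2.

Lemma sq_ge0 v : 0 <= sq v.
Proof. by apply: sumr_ge0 => i _; rewrite sqr_ge0. Qed.

Lemma bilC u v : bil u v = bil v u.
Proof.
rewrite /bil exchange_big; apply: eq_bigr => i _; apply: eq_bigr => j _.
by rewrite hA; ring.
Qed.

Lemma bil_expand c w t : bil (c + t *: w) (c + t *: w) =
  bil c c + 2 * t * bil c w + t ^+ 2 * bil w w.
Proof.
have -> : 2 * t * bil c w = t * bil c w + t * bil w c by rewrite bilC; ring.
rewrite /bil !mulr_sumr -!big_split /=; apply: eq_bigr => i _.
rewrite !mulr_sumr -!big_split /=; apply: eq_bigr => j _.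
rewrite !mxE; ring.
Qed.

Lemma sq_expand c w t : sq (c + t *: w) =
  sq c + 2 * t * (\sum_i c ord0 i * w ord0 i) + t ^+ 2 * sq w.
Proof.
rewrite /sq !mulr_sumr -!big_split /=; apply: eq_bigr => i _.
rewrite !mxE; ring.
Qed.

Lemma bilZ a u : bil (a *: u) (a *: u) = a ^+ 2 * bil u u.
Proof.
rewrite /bil !mulr_sumr; apply: eq_bigr => i _.
rewrite !mulr_sumr; apply: eq_bigr => j _; rewrite !mxE; ring.
Qed.

Lemma sqZ a u : sq (a *: u) = a ^+ 2 * sq u.
Proof.
rewrite /sq !mulr_sumr; apply: eq_bigr => i _; rewrite !mxE; ring.
Qed.

Lemma sq0 u : sq u = 0 -> u = 0.
Proof.
move=> h; apply/rowP => i; rewrite mxE.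
have /psumr_eq0P H : sq u = 0 by [].
have := H (fun i _ => sqr_ge0 (u ord0 i)) i isT.
by move/eqP; rewrite sqrf_eq0 => /eqP.
Qed.


Lemma cont_coord2 (i j : 'I_n) (a : R) :
  continuous (fun v : 'rV[R]_n => v ord0 i * a * v ord0 j).
Proof.
move=> v; apply: (@continuousM _ _ (fun v : 'rV[R]_n => v ord0 i * a) (fun v => v ord0 j)); last exact: coord_continuous.
apply: (@continuousM _ _ (fun v : 'rV[R]_n => v ord0 i) (fun v => a)); [exact: coord_continuous|exact: cst_continuous].
Qed.

Lemma cont_sq : continuous sq.
Proof.
apply: cont_sum => i; have := cont_coord2 i i 1.
have -> : (fun v : 'rV[R]_n => v ord0 i * 1 * v ord0 i) = (fun v => v ord0 i ^+ 2).
  by apply: funext => v; rewrite mulr1 expr2.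
by [].
Qed.

Lemma cont_bil : continuous (fun v => bil v v).
Proof.
apply: cont_sum => i; apply: cont_sum => j; exact: cont_coord2.
Qed.

Lemma eig_bound v : rho * sq v <= bil v v.
Proof.
have [n0|n_gt0] := posnP n.
  have hs : forall F : 'I_n -> R, \sum_i F i = 0.
    move=> F; apply: big1 => i _; exfalso; have := ltn_ord i; by rewrite [X in (_ < X)%N]n0 ltn0.
  by rewrite /sq /bil !hs mulr0.
pose i0 := Ordinal n_gt0.
pose K := [set v : 'rV[R]_n | sq v = 1].
pose e : 'rV[R]_n := \row_j (j == i0)%:R.
have eK : K e.
  rewrite /K /= /sq (bigD1 i0) //= big1 ?addr0; first by rewrite mxE eqxx expr1n.
  by move=> j /negPf hj; rewrite mxE hj expr0n.
have Kne : K !=set0 by exists e.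
have Kcl : closed K.
  have -> : K = sq @^-1` [set 1] by [].
  apply: preimage_closed; first by move=> x _; exact: cont_sq.
  apply: compact_closed; [exact: Rhausdorff | exact: compact_set1].
have Kc : compact K.
  apply: (subclosed_compact Kcl (rV_compact (fun=> @segment_compact R (-1) 1))).
  move=> w /= hw i; rewrite in_itv /=.
  have : w ord0 i ^+ 2 <= 1.
    rewrite -hw /sq (bigD1 i) //= lerDl; apply: sumr_ge0 => j _; exact: sqr_ge0.
  move=> h; apply/andP; split; nra.
have [c cK cmin] := compact_EVT_min Kne Kc (continuous_subspaceT cont_bil).
move: cK; rewrite inE /K /= => cK.
set lam := bil c c.
have hall : forall u, lam * sq u <= bil u u.
  move=> u; have [s0|spos] := eqVneq (sq u) 0.
    by rewrite s0 (sq0 _ s0) mulr0 /bil big1 // => i _; rewrite big1 // => j _; rewrite mxE !mul0r.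
  have sgt : 0 < sq u by rewrite lt_def spos sq_ge0.
  pose w := (Num.sqrt (sq u))^-1 *: u.
  have hw : K w.
    rewrite /K /= /w sqZ exprVn sqr_sqrtr ?sq_ge0 // mulVf //.
  have := cmin w; rewrite inE => /(_ hw); rewrite /w bilZ exprVn sqr_sqrtr ?sq_ge0 //.
  rewrite -/lam => h.
  by rewrite -ler_pdivlMr // mulrC.
have lagr : forall w, bil c w = lam * \sum_i c ord0 i * w ord0 i.
  move=> w; apply/eqP; rewrite -subr_eq0; apply/eqP.
  apply: (@quad0 _ (bil w w - lam * sq w)) => t.
  have := hall (c + t *: w); rewrite bil_expand sq_expand cK -/lam => h.
  have -> : 2 * t * (bil c w - lam * \sum_i c ord0 i * w ord0 i) +
      t ^+ 2 * (bil w w - lam * sq w) =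
    (lam + 2 * t * bil c w + t ^+ 2 * bil w w) -
      lam * (1 + 2 * t * (\sum_i c ord0 i * w ord0 i) + t ^+ 2 * sq w) by ring.
  by rewrite subr_ge0.
have ceig : c *m A = lam *: c.
  apply/rowP => j; rewrite !mxE.
  pose w : 'rV[R]_n := \row_k (k == j)%:R.
  have := lagr w.
  have -> : bil c w = \sum_i c ord0 i * A i j.
    rewrite /bil; apply: eq_bigr => i _.
    rewrite (bigD1 j) //= big1 ?addr0; first by rewrite mxE eqxx mulr1.
    by move=> k /negPf hk; rewrite mxE hk mulr0.
  have -> : \sum_i c ord0 i * w ord0 i = c ord0 j.
    rewrite (bigD1 j) //= big1 ?addr0; first by rewrite mxE eqxx mulr1.
    by move=> k /negPf hk; rewrite mxE hk mulr0.
  by move=> ->.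
have hrho : rho <= lam.
  apply: hev; apply/eigenvalueP; exists c => //.
  apply/eqP => c0; move: cK; rewrite c0 /sq big1 => [/eqP|i _]; last by rewrite mxE expr0n.
  by rewrite eq_sym oner_eq0.
apply: le_trans (hall v); apply: ler_wpM2r => //; exact: sq_ge0.
Qed.

End Eig.

Lemma mem_itvco (R : realType) (a b z : R) : (z \in `[a, b[%classic) = (a <= z < b).
Proof.
apply/idP/idP => [/set_mem /= | h]; [by rewrite in_itv | by apply: mem_set; rewrite /= in_itv].
Qed.

Lemma approx_pt (R : realType) (h Mx z : R) (K : nat) : 0 < h -> `|z| < Mx -> Mx * h <= K%:R ->
  `|z - \sum_(k < (K + K)%N) ((k%:R - K%:R) / h) *
      (z \in `[(k%:R - K%:R) / h, (k%:R - K%:R) / h + h^-1[%classic)%:R| <= h^-1.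
Proof.
move=> h0 hz hK.
have hzK : `|z * h| < K%:R.
  rewrite normrM (gtr0_norm h0); apply: lt_le_trans hK; by rewrite ltr_pM2r.
pose x := z * h + K%:R.
have x0 : 0 <= x by move: hzK; rewrite ltr_norml /x => /andP[]; lra.
have xdef : x = z * h + K%:R by [].
pose k0 := Num.truncn x.
have /andP[hk1 hk2] := truncn_itv x0.
have k0lt : (k0 < K + K)%N.
  rewrite -(ltr_nat R) natrD; move: hzK; rewrite ltr_norml => /andP[_ ?]; lra.
have hne : h != 0 by rewrite gt_eqF.
have mem : forall k : nat,
    (z \in `[(k%:R - K%:R) / h, (k%:R - K%:R) / h + h^-1[%classic) = (k == k0).
  move=> k; rewrite mem_itvco.
  have e1 : ((k%:R - K%:R) / h <= z) = (k%:R <= x).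
    rewrite -(ler_pM2r h0) divfK // /x; apply/idP/idP => H; lra.
  have e2 : (z < (k%:R - K%:R) / h + h^-1) = (x < k.+1%:R).
    rewrite -(ltr_pM2r h0) mulrDl divfK // mulVf // /x -natr1; apply/idP/idP => H; lra.
  by rewrite e1 e2 -truncn_eq // eq_sym.
rewrite (bigD1 (Ordinal k0lt)) //= big1 => [|k hk]; last first.
  rewrite mem; case: eqP => [hk0|]; last by rewrite mulr0.
  by exfalso; move: hk => /eqP; apply; apply: val_inj.
rewrite mem eqxx mulr1 addr0.
have -> : z - (k0%:R - K%:R) / h = (x - k0%:R) / h by rewrite /x; field.
rewrite ger0_norm; last by apply: divr_ge0; [lra | exact: ltW].
rewrite -[X in _ <= X]mul1r ler_pM2r ?invr_gt0 //; lra.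
Qed.

Lemma small_all (R : realType) (v C : R) :
  (forall n : nat, `|v| <= C / n.+1%:R) -> v = 0.
Proof.
move=> H; apply/eqP; apply/negPn/negP => hv.
have v0 : 0 < `|v| by rewrite normr_gt0.
have := H (Num.truncn (C / `|v|)).
have := truncnS_gt (C / `|v|).
set m := (Num.truncn _).+1%:R => hm.
have m0 : 0 < m by rewrite /m ltr0n.
rewrite ler_pdivlMr // => h2.
have : C / `|v| * `|v| < m * `|v| by rewrite ltr_pM2r.
rewrite divfK ?gt_eqF //; lra.
Qed.

Section Prob.
Context {dT : measure_display} {T : measurableType dT} {R : realType}.
Variable (P : probability T R).

Definition bdd (f : T -> R) := measurable_fun setT f /\ exists C : R, {ae P, forall t, `|f t| <= C}.

Lemma bdd_Lfun {f} : bdd f -> f \in Lfun P 1.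
Proof.
case=> mf [C hC]; apply/Lfun1_integrable; apply/integrableP; split.
  exact/measurable_EFinP.
apply: (@le_lt_trans _ _ (\int[P]_x (cst `|C|%:E x))%E).
  apply: ae_ge0_le_integral => //.
  - apply/(measurable_EFinP _ (Num.norm \o f)); exact: measurableT_comp.
  - move=> x _ /=; by rewrite lee_fin.
  - apply: filterS hC => t ht _ /=; rewrite lee_fin; apply: le_trans ht _; exact: ler_norm.
by rewrite integral_cst //= probability_setT mule1 ltry.
Qed.

Lemma bdd_cst c : bdd (fun=> c).
Proof. split => //; exists `|c|; exact: aeW. Qed.

Lemma bdd_add {f g} : bdd f -> bdd g -> bdd (fun t => f t + g t).
Proof.
case=> mf [C hC] [mg [D hD]]; split; first exact: measurable_funD.
exists (C + D); apply: filterS2 hC hD => t h1 h2.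
apply: le_trans (ler_normD _ _) _; exact: lerD.
Qed.

Lemma bdd_mul {f g} : bdd f -> bdd g -> bdd (fun t => f t * g t).
Proof.
case=> mf [C hC] [mg [D hD]]; split; first exact: measurable_funM.
exists (`|C| * `|D|); apply: filterS2 hC hD => t h1 h2.
rewrite normrM; apply: ler_pM => //; apply: le_trans (ler_norm _); assumption.
Qed.

Lemma bdd_sum (I : Type) (r : seq I) (F : I -> T -> R) :
  (forall i, bdd (F i)) -> bdd (fun t => \sum_(i <- r) F i t).
Proof.
move=> hF; elim: r => [|a r IH].
  under eq_fun do rewrite big_nil; exact: bdd_cst.
under eq_fun do rewrite big_cons; exact: bdd_add.
Qed.

Definition Exf (f : T -> R) := Ex P f.

Lemma Ex_fin {f} : bdd f -> ('E_P[f] \is a fin_num)%E.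
Proof. by move=> /bdd_Lfun h; exact: expectation_fin_num. Qed.

Lemma ExD {f g} : bdd f -> bdd g -> Ex P (fun t => f t + g t) = Ex P f + Ex P g.
Proof.
move=> hf hg; rewrite /Ex -fineD ?Ex_fin //; congr fine.
by apply: expectationD; exact: bdd_Lfun.
Qed.

Lemma ExZ a {f} : bdd f -> Ex P (fun t => a * f t) = a * Ex P f.
Proof.
move=> hf; rewrite /Ex; have := expectationZl (X:=f) a (bdd_Lfun hf).
move=> h; rewrite [X in fine X](_ : _ = (a%:E * 'E_P[f])%E); last by rewrite -h; congr expectation; apply: funext => t /=; rewrite mulrC.
by rewrite -[in LHS](fineK (Ex_fin hf)) -EFinM.
Qed.

Lemma Ex_cst c : Ex P (fun=> c) = c.
Proof. by rewrite /Ex expectation_cst. Qed.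

Lemma Ex_sum (I : Type) (r : seq I) (F : I -> T -> R) :
  (forall i, bdd (F i)) -> Ex P (fun t => \sum_(i <- r) F i t) = \sum_(i <- r) Ex P (F i).
Proof.
move=> hF; elim: r => [|a r IH].
  under eq_fun do rewrite big_nil; by rewrite Ex_cst big_nil.
under eq_fun do rewrite big_cons; rewrite ExD ?IH ?big_cons //; exact: bdd_sum.
Qed.


Lemma Ex_ae f g : measurable_fun setT f -> measurable_fun setT g ->
  {ae P, forall t, f t = g t} -> Ex P f = Ex P g.
Proof.
move=> mf mg h; rewrite /Ex unlock; congr fine.
apply: ae_eq_integral => //.
- exact/measurable_EFinP.
- exact/measurable_EFinP.
- by apply: filterS h => t ht _ /=; rewrite ht.
Qed.

Lemma Ex_ge0 f : bdd f -> {ae P, forall t, 0 <= f t} -> 0 <= Ex P f.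
Proof.
move=> hf h; rewrite (@Ex_ae f (fun t => `|f t|)).
- by apply: fine_ge0; apply: expectation_ge0 => t.
- by case: hf.
- by apply: measurableT_comp => //; case: hf.
- by apply: filterS h => t ht; rewrite ger0_norm.
Qed.

Lemma bdd_opp {f} : bdd f -> bdd (fun t => - f t).
Proof.
move=> hf; have := bdd_mul (bdd_cst (-1)) hf.
by under eq_fun do rewrite mulN1r.
Qed.

Lemma ExN {f} : bdd f -> Ex P (fun t => - f t) = - Ex P f.
Proof.
move=> hf; have := ExZ (-1) hf; rewrite mulN1r => <-.
by congr Ex; apply: funext => t; rewrite mulN1r.
Qed.

Lemma ExB {f g} : bdd f -> bdd g -> Ex P (fun t => f t - g t) = Ex P f - Ex P g.
Proof. by move=> hf hg; rewrite ExD ?ExN //; exact: bdd_opp. Qed.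

Lemma Ex_abs_le f C : bdd f -> {ae P, forall t, `|f t| <= C} -> `|Ex P f| <= C.
Proof.
move=> hf h; rewrite ler_norml.
have h1 := @Ex_ge0 (fun t => C - f t) (bdd_add (bdd_cst C) (bdd_opp hf)).
have h2 := @Ex_ge0 (fun t => C + f t) (bdd_add (bdd_cst C) hf).
rewrite ExB ?Ex_cst in h1; last 2 first; [exact: bdd_cst|exact: hf|].
rewrite ExD ?Ex_cst in h2; last 2 first; [exact: bdd_cst|exact: hf|].
have g1 : {ae P, forall t, 0 <= C - f t}.
  by apply: filterS h => t; rewrite ler_norml subr_ge0 => /andP[].
have g2 : {ae P, forall t, 0 <= C + f t}.
  by apply: filterS h => t; rewrite ler_norml => /andP[ha _]; rewrite -lerBlDl sub0r.
have := h1 g1; have := h2 g2; lra.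
Qed.


Lemma bdd_indic (A : set T) : measurable A -> bdd (\1_A : T -> R).
Proof.
move=> mA; split; first exact: measurable_indic.
exists 1; apply: aeW => t; rewrite /indic; case: (t \in A); by rewrite ?normr1 ?normr0.
Qed.

Lemma Ex_orth (X eps : T -> R) (Mx : R) :
  measurable_fun setT X -> bdd eps -> {ae P, forall t, `|X t| < Mx} ->
  (forall B : set R, measurable B -> Ex P (fun t => \1_(X @^-1` B) t * eps t) = 0) ->
  Ex P (fun t => X t * eps t) = 0.
Proof.
move=> mX heps hX hB.
have [meps [Ce hCe]] := heps.
have hCe' : {ae P, forall t, `|eps t| <= `|Ce|}.
  by apply: filterS hCe => t ht; apply: le_trans ht (ler_norm _).
have hbX : bdd X by split => //; exists Mx; apply: filterS hX => t /ltW.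
have mpre : forall B : set R, measurable B -> measurable (X @^-1` B).
  by move=> B mB; rewrite -[X @^-1` B]setTI; exact: mX.
apply: (@small_all _ _ `|Ce|) => n.
pose h : R := n.+1%:R.
have h0 : 0 < h by rewrite /h ltr0n.
pose K := (Num.truncn (Mx * h)).+1.
have hK : Mx * h <= K%:R by apply: ltW; exact: truncnS_gt.
pose a := fun k : nat => (k%:R - K%:R) / h.
pose B := fun k : nat => `[a k, a k + h^-1[%classic.
have mB : forall k, measurable (B k) by move=> k; exact: measurable_itv.
pose g := fun t => \sum_(k < (K + K)%N) a k * \1_(X @^-1` B k) t.
have bI : forall k, bdd (fun t => \1_(X @^-1` B k) t * eps t).
  by move=> k; apply: bdd_mul => //; apply: bdd_indic; exact: mpre.
have bg : bdd g.
  apply: bdd_sum => k; apply: bdd_mul; first exact: bdd_cst.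
  by apply: bdd_indic; exact: mpre.
have Eg : Ex P (fun t => g t * eps t) = 0.
  under eq_fun => t do rewrite /g mulr_suml.
  rewrite Ex_sum => [|k]; last by apply: bdd_mul => //; apply: bdd_mul; [exact: bdd_cst|apply: bdd_indic; exact: mpre].
  apply: big1 => k _.
  under eq_fun => t do rewrite -mulrA.
  by rewrite ExZ ?hB ?mulr0.
have -> : Ex P (fun t => X t * eps t) = Ex P (fun t => (X t - g t) * eps t).
  under [in RHS]eq_fun => t do rewrite mulrBl.
  by rewrite ExB ?Eg ?subr0 //; apply: bdd_mul.
apply: Ex_abs_le.
  by apply: bdd_mul => //; apply: bdd_add => //; exact: bdd_opp.
apply: filterS2 hX hCe' => t h1 h2.
rewrite normrM mulrC; apply: ler_pM => //.
have := @approx_pt R h Mx (X t) K h0 h1 hK.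
suff -> : g t = \sum_(k < (K + K)%N) ((k%:R - K%:R) / h) *
      (X t \in `[(k%:R - K%:R) / h, (k%:R - K%:R) / h + h^-1[%classic)%:R by [].
by apply: eq_bigr => k _; rewrite /indic.
Qed.

End Prob.

Lemma sum_enumF (R : realType) d (F : {set 'I_d}) (G : 'I_d -> R) :
  (forall i, i \notin F -> G i = 0) -> \sum_i G i = \sum_(a < #|F|) G (enum_val a).
Proof.
move=> hG; rewrite -big_enum_val [LHS](bigID (mem F)) /= [X in _ + X]big1 ?addr0 //.
Qed.

Lemma amgm_sum (R : realType) (I : finType) (D : {set I}) (f : I -> R) (lam : R) :
  0 < lam ->
  \sum_(i in D) `|f i| <= (\sum_(i in D) f i ^+ 2) / (2 * lam) + #|D|%:R * lam / 2.
Proof.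
move=> l0.
have -> : (\sum_(i in D) f i ^+ 2) / (2 * lam) + #|D|%:R * lam / 2 =
    \sum_(i in D) (f i ^+ 2 / (2 * lam) + lam / 2).
  rewrite big_split /= -mulr_suml sumr_const -mulr_natl; congr (_ + _). ring.
apply: ler_sum => i _.
have e : f i ^+ 2 / (2 * lam) + lam / 2 = (f i ^+ 2 + lam ^+ 2) / (2 * lam).
  by field; rewrite gt_eqF.
rewrite e ler_pdivlMr; last by apply: mulr_gt0.
have h1 : 0 <= (`|f i| - lam) ^+ 2 := sqr_ge0 _.
have h2 : (`|f i| - lam) ^+ 2 = `|f i| ^+ 2 - 2 * `|f i| * lam + lam ^+ 2 by ring.
rewrite real_normK in h2; last exact: num_real.
lra.
Qed.

Theorem mainTheorem8 (dT : measure_display) (T : measurableType dT) (R : realType)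
  (P : probability T R) (d : nat) (x : 'I_d -> T -> R) (y : T -> R)
  (betastar : 'I_d -> R) (rho L M : R) (S : {set 'I_d}) (bS : 'I_d -> R) :
  (* measurability of the data *)
  (forall i, measurable_fun setT (x i)) -> measurable_fun setT y ->
  (* E[x] = 0 *)
  (forall i, Ex P (x i) = 0) ->
  (* y = <beta*, x> + eps with E[eps | x] = 0 *)
  cond_mean_zero P x (fun t => y t - inner x betastar t) ->
  (* eigenvalue bounds on Sigma_F for |F| = s* *)
  0 < rho -> rho <= L ->
  (forall F : {set 'I_d}, #|F| = #|supp betastar| ->
     forall a, eigenvalue (SigmaF P x F) a -> rho <= a <= L) ->
  (* mu_F < 1 for |F| = s* *)
  (forall F : {set 'I_d}, #|F| = #|supp betastar| ->
     forall j, j \notin F ->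
       \sum_(k < #|F|) `|(invmx (SigmaF P x F) *m CovFj P x F j) k ord0| < 1) ->
  (* a.s. boundedness *)
  {ae P, forall t, `|y t| < 1} ->
  {ae P, forall t, forall i, `|x i t| < M} ->
  (* S strictly contained in S*, bS = beta^S *)
  S \proper supp betastar ->
  is_betaS P x y S bS ->
  let sstar := #|supp betastar| in
  let k := #|S| in
  let c := Num.sqrt (rho ^+ 3 / L) * (Num.sqrt ((sstar - k)%:R))^-1 in
  c * l2norm (fun i => betastar i - bS i)
    <= \big[Num.max/0]_(i | i \notin S) `|Zc P x y bS i| /\
  c * l2norm (fun i => if i \in supp betastar :\: S then betastar i else 0)
    <= c * l2norm (fun i => betastar i - bS i).
Proof.
move=> mx my Ex0 hcm rho0 rhoL heig _ hy hxM hprop [hsuppS hmin] sstar k c.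
pose eps := fun t => y t - inner x betastar t.
have bx : forall i, bdd P (x i).
  move=> i; split; first exact: mx.
  by exists M; apply: filterS hxM => t ht; exact: ltW (ht i).
have hxi : forall i, {ae P, forall t, `|x i t| < M}.
  by move=> i; apply: filterS hxM => t ht; exact: ht i.
have by_ : bdd P y by split => //; exists 1; apply: filterS hy => t ht; exact: ltW.
have binner : forall b, bdd P (inner x b).
  move=> b; apply: bdd_sum => i; apply: bdd_mul; [exact: bdd_cst | exact: bx].
have beps : bdd P eps by apply: bdd_add => //; apply: bdd_opp; exact: binner.
have orth : forall i, Ex P (fun t => x i t * eps t) = 0.
  move=> i; apply: (@Ex_orth _ _ _ P (x i) eps M (mx i) beps (hxi i)) => B mB.
  have HA : sigma_x x (x i @^-1` B).
    by apply: sub_gen_smallest; exists i, B; split.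
  exact: (congr1 fine (hcm _ HA)).
pose m := fun i j => Sigma P x i j.
have mE : forall i j, m i j = Ex P (fun t => x i t * x j t).
  move=> i j; rewrite /m /Sigma mxE covariance.unlock /Ex.
  congr (fine (expectation _ _)); apply: funext => t /=.
  have := Ex0 i; have := Ex0 j; rewrite /Ex => -> ->; rewrite !fctE /=. by rewrite !subr0.
have msym : forall i j, m i j = m j i.
  by move=> i j; rewrite !mE; congr Ex; apply: funext => t; rewrite mulrC.
have bxx : forall i j, bdd P (fun t => x i t * x j t) by move=> i j; apply: bdd_mul.
pose dl := fun j => betastar j - bS j.
have innerB : forall t, inner x betastar t - inner x bS t = \sum_j dl j * x j t.
  by move=> t; rewrite /inner -sumrB; apply: eq_bigr => j _; rewrite /dl mulrBl.
have ZcE : forall i, Zc P x y bS i = \sum_j m i j * dl j.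
  move=> i; rewrite /Zc.
  have -> : (fun t => x i t * (y t - inner x bS t)) =
      (fun t => x i t * eps t + \sum_j dl j * (x i t * x j t)).
    apply: funext => t; rewrite /eps.
    have -> : y t - inner x bS t = (y t - inner x betastar t) + (inner x betastar t - inner x bS t) by ring.
    rewrite innerB mulrDr mulr_sumr; congr (_ + _); apply: eq_bigr => j _; ring.
  rewrite ExD; last 2 first.
  - by apply: bdd_mul.
  - by apply: bdd_sum => j; apply: bdd_mul => //; exact: bdd_cst.
  rewrite orth add0r Ex_sum => [|j]; last by apply: bdd_mul => //; exact: bdd_cst.
  by apply: eq_bigr => j _; rewrite ExZ // mE mulrC.
have bS0 : forall j, j \notin S -> bS j = 0.
  move=> j hj; apply/eqP; apply/negPn/negP => hb; move/negP: hj; apply.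
  by apply: (fintype.subsetP hsuppS); rewrite inE.
have foc : forall i, i \in S -> Zc P x y bS i = 0.
  move=> i hi.
  pose r := fun t => y t - inner x bS t.
  have br : bdd P r by apply: bdd_add => //; apply: bdd_opp; exact: binner.
  have br2 : bdd P (fun t => r t ^+ 2).
    by under eq_fun do rewrite expr2; exact: bdd_mul.
  have ZcE' : Zc P x y bS i = Ex P (fun t => x i t * r t) by [].
  change (Ex P (fun t => x i t * r t) = 0).
  apply/eqP; rewrite -oppr_eq0; apply/eqP.
  apply: (@quad0 _ (Ex P (fun t => x i t * x i t))) => t0.
  pose b' := fun j => bS j + t0 * (j == i)%:R.
  have hsupp : supp b' \subset S.
    apply/fintype.subsetP => j; rewrite inE /b'; case: (eqVneq j i) => [-> //|hji].
    by rewrite mulr0 addr0 => hj; apply: (fintype.subsetP hsuppS); rewrite inE.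
  have := hmin b' hsupp; rewrite /risk.
  have -> : (fun t => (y t - inner x b' t) ^+ 2) =
      (fun t => r t ^+ 2 + ((-2 * t0) * (x i t * r t) + t0 ^+ 2 * (x i t * x i t))).
    apply: funext => t.
    have -> : inner x b' t = inner x bS t + t0 * x i t.
      have e : \sum_j (t0 * (j == i)%:R) * x j t = t0 * x i t.
        rewrite (bigD1 i) //= big1 ?addr0 => [|j /negPf ->]; first by rewrite eqxx mulr1.
        by rewrite mulr0 mul0r.
      rewrite /inner -e -big_split; apply: eq_bigr => j _; by rewrite /b' mulrDl.
    rewrite /r; ring.
  have bc : forall a : R, bdd P (fun=> a) by move=> a; exact: bdd_cst.
  rewrite ExD //; last first.
    by apply: bdd_add; apply: bdd_mul => //; apply: bdd_mul.
  rewrite ExD; last 2 first.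
  - by apply: bdd_mul => //; apply: bdd_mul.
  - by apply: bdd_mul => //; apply: bdd_mul.
  have bxr : bdd P (fun t => x i t * r t) by apply: bdd_mul.
  rewrite !ExZ // => h.
  have {}h : Ex P (fun t => r t ^+ 2) <= Ex P (fun t => r t ^+ 2) +
     (-2 * t0 * Ex P (fun t => x i t * r t) + t0 ^+ 2 * Ex P (fun t => x i t * x i t)) := h.
  lra.
have hSF : S \subset supp betastar := proper_sub hprop.
have dl0 : forall j, j \notin supp betastar -> dl j = 0.
  move=> j hj.
  have hjS : j \notin S by apply: contra hj; exact: (fintype.subsetP hSF).
  by rewrite /dl bS0 // subr0; move: hj; rewrite inE negbK => /eqP.
pose Q := \sum_i dl i * Zc P x y bS i.
have hQ1 : Q = \sum_i \sum_j dl i * m i j * dl j.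
  rewrite /Q; apply: eq_bigr => i _; rewrite ZcE mulr_sumr; apply: eq_bigr => j1 _; ring.
pose N2 := \sum_i dl i ^+ 2.
have hlow : rho * N2 <= Q.
  pose F := supp betastar.
  have hA : forall a b, SigmaF P x F a b = SigmaF P x F b a.
    by move=> a b; rewrite !mxE covarianceC.
  have hev : forall a, eigenvalue (SigmaF P x F) a -> rho <= a.
    by move=> a /(heig F erefl) /andP[].
  pose u : 'rV[R]_#|F| := \row_a dl (enum_val a).
  have := eig_bound (SigmaF P x F) rho hA hev u.
  have -> : sq u = N2.
    rewrite /N2 (@sum_enumF _ _ F) => [|i hi]; last by rewrite dl0 // expr2 mulr0.
    by apply: eq_bigr => a _; rewrite mxE.
  have -> : bil (SigmaF P x F) u u = Q.
    rewrite hQ1 (@sum_enumF _ _ F) => [|i hi]; last by apply: big1 => j _; rewrite dl0 // !mul0r.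
    apply: eq_bigr => a _; rewrite (@sum_enumF _ _ F) => [|j hj]; last by rewrite [dl j]dl0 // mulr0.
    by apply: eq_bigr => b _; rewrite /m /Sigma !mxE.
  by [].
pose D := supp betastar :\: S.
have hQ2 : Q = \sum_(i in D) dl i * Zc P x y bS i.
  rewrite /Q [LHS](bigID (mem D)) /= [X in _ + X]big1 ?addr0 // => i.
  rewrite finset.in_setD negb_and negbK; case/orP => [hiS|hiF].
    by rewrite foc // mulr0.
  by rewrite dl0 // mul0r.
set Zm := \big[Num.max/0]_(i | i \notin S) `|Zc P x y bS i|.
have hZ : forall i, i \notin S -> `|Zc P x y bS i| <= Zm.
  by move=> i hi; rewrite /Zm (bigD1 i) //= le_max lexx.
have Zm0 : 0 <= Zm.
  rewrite /Zm; elim/big_ind: _ => //.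
  by move=> a b ha hb; rewrite le_max ha.
have hup : Q <= Zm * \sum_(i in D) `|dl i|.
  rewrite hQ2 mulr_sumr; apply: ler_sum => i hi.
  have hiS : i \notin S by move: hi; rewrite finset.in_setD => /andP[].
  apply: le_trans (ler_norm _) _; rewrite normrM [Zm * _]mulrC.
  by apply: ler_wpM2l => //; exact: hZ.
have hD : #|D| = (sstar - k)%N.
  by rewrite /D cardsD (finset.setIidPr hSF).
have mpos : (0 < sstar - k)%N by rewrite subn_gt0; exact: proper_card.
have N2ge0 : 0 <= N2 by apply: sumr_ge0 => i _; exact: sqr_ge0.
have hN : l2norm dl = Num.sqrt N2 by [].
have hsmpos : 0 < Num.sqrt ((sstar - k)%:R : R) by rewrite sqrtr_gt0 ltr0n.
have hc0 : 0 <= c by rewrite /c mulr_ge0 ?invr_ge0 ?sqrtr_ge0.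
split; last first.
  apply: ler_wpM2l => //; apply: ler_wsqrtr; apply: ler_sum => i _.
  case: ifP => hi; last by rewrite expr2 mul0r sqr_ge0.
  have hiS : i \notin S by move: hi; rewrite finset.in_setD => /andP[].
  by rewrite bS0 // subr0.
have -> : l2norm (fun i => betastar i - bS i) = Num.sqrt N2 by [].
set mm := ((sstar - k)%:R : R).
set sm := Num.sqrt mm.
have L0 : 0 < L by apply: lt_le_trans rhoL.
have hsr : Num.sqrt (rho ^+ 3 / L) <= rho.
  rewrite -[X in _ <= X](ger0_norm (ltW rho0)) -sqrtr_sqr ler_sqrt ?sqr_ge0 //.
  rewrite ler_pdivrMr // exprSr; apply: ler_wpM2l => //; exact: sqr_ge0.
have [->|hN2] := eqVneq N2 0; first by rewrite sqrtr0 mulr0.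
have N2pos : 0 < N2 by rewrite lt_def hN2 N2ge0.
set N := Num.sqrt N2.
have Npos : 0 < N by rewrite sqrtr_gt0.
have NN : N * N = N2 by rewrite -expr2 sqr_sqrtr.
have mm0 : 0 <= mm by rewrite /mm ler0n.
have smm : sm * sm = mm by rewrite -expr2 sqr_sqrtr.
have lpos : 0 < N / sm by apply: divr_gt0.
have hs : \sum_(i in D) `|dl i| <= sm * N.
  apply: le_trans (amgm_sum _ _ D dl _ lpos) _.
  rewrite hD -/mm.
  have SD : \sum_(i in D) dl i ^+ 2 <= N2.
    by rewrite /N2 [X in _ <= X](bigID (mem D)) /= lerDl; apply: sumr_ge0 => i _; exact: sqr_ge0.
  apply: le_trans (_ : N2 / (2 * (N / sm)) + mm * (N / sm) / 2 <= _).
    rewrite lerD2r; apply: ler_wpM2r => //; rewrite invr_ge0; apply: mulr_ge0 => //; exact: ltW.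
  suff -> : N2 / (2 * (N / sm)) + mm * (N / sm) / 2 = sm * N by [].
  rewrite -NN -smm; field.
  by apply/andP; split; apply: lt0r_neq0.
have h3 : rho * N * N <= Zm * sm * N.
  rewrite -mulrA NN -mulrA (mulrC sm); apply: le_trans hlow (le_trans hup _).
  by rewrite (mulrC N) ler_wpM2l.
rewrite ler_pM2r // in h3.
apply: le_trans (_ : rho / sm * N <= _).
  by rewrite /c; apply: ler_wpM2r; [exact: ltW | apply: ler_wpM2r => //; rewrite invr_ge0 ltW].
by rewrite mulrAC ler_pdivrMr.
Qed.
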